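(* Let $\Sigma,\Gamma$ be finite alphabets, each with at least two letters. For every infinite word $w\in\Sigma^{\mathbb{N}}$, $\mathrm{ACE}_{\mathcal{I}}(w) \le \mathrm{ACE}'_{\mathcal{I}}(w)$.
   Context: $\mathrm{Fact}_n(w)$ is the set of length-$n$ factors of $w$. For a nonempty word $v$ and integer $p\ge0$, $v^{p/|v|}$ is the prefix of length $p$ of $vvv\cdots$. For a nonempty finite word $u$, $\mathrm{E}(u) = \sup\{ r \in \mathbb{Q} : u = v^r \text{ for some nonempty } v\}$. $\mathcal{I}$ is the set of injective morphisms $\Sigma^*\to\Gamma^*$; for a finite nonempty word $u\in\Sigma^+$, $\mathrm{E}_{\mathcal{I}}(u) = \sup\{\mathrm{E}(h(u)) : h\in\mathcal{I}\}$. For an infinite word $w$, $\mathrm{ACE}(w) = \limsup_{n\to\infty}\sup\{\mathrm{E}(u) : u\in\mathrm{Fact}_n(w)\}$, $\mathrm{ACE}_{\mathcal{I}}(w) = \sup\{\mathrm{ACE}(h(w)) : h\in\mathcal{I}\}$, and $\mathrm{ACE}'_{\mathcal{I}}(w) = \limsup_{n\to\infty}\sup\{\mathrm{E}_{\mathcal{I}}(u) : u\in\mathrm{Fact}_n(w)\}$. *)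

(* Defs.v *)
From HB Require Import structures.
From mathcomp Require Import all_boot all_order all_algebra.
From mathcomp Require Import all_classical all_reals all_analysis.
Set Implicit Arguments. Unset Strict Implicit. Unset Printing Implicit Defensive.
Import Order.TTheory GRing.Theory Num.Theory.
Local Open Scope classical_set_scope.
Local Open Scope ring_scope.

Definition FactInf (T : Type) (w : nat -> T) (n : nat) : set (seq T) :=
  [set u | exists k, u = [seq w i | i <- iota k n]].

(* v^{p/|v|}: the prefix of length p of v v v ... (for v nonempty). *)
Definition rpow (T : Type) (v : seq T) (p : nat) : seq T :=
  take p (flatten (nseq p v)).

Definition Exp (R : realType) (T : eqType) (u : seq T) : \bar R :=
  ereal_sup [set ((ratr r)%:E : \bar R) | r in
    [set r : rat | exists v : seq T, v != [::] /\
        exists p : nat, r = p%:R / (size v)%:R /\ u = rpow v p]].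

Definition morph (S G : Type) (f : S -> seq G) (u : seq S) : seq G :=
  flatten (map f u).

Definition Inj (S G : Type) : set (S -> seq G) :=
  [set f | injective (morph f)].

Definition ExpI (R : realType) (S G : eqType) (u : seq S) : \bar R :=
  ereal_sup [set Exp R (morph f u) | f in @Inj S G].

(* Fact_n(h(w)) for the infinite word h(w) (all letter images are nonempty
   when h is injective, so h(w) is the limit of the images of the prefixes
   of w; its factors are exactly the factors of the h(prefix)'s). *)
Definition FactMorph (S G : eqType) (f : S -> seq G) (w : nat -> S) (n : nat)
  : set (seq G) :=
  [set x | size x = n /\ exists m, infix x (morph f [seq w i | i <- iota 0 m])].

Definition ACEmorph (R : realType) (S G : eqType) (f : S -> seq G)
  (w : nat -> S) : \bar R :=
  limn_esup (fun n => ereal_sup [set Exp R u | u in FactMorph f w n]).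

Definition ACE_I (R : realType) (S G : eqType) (w : nat -> S) : \bar R :=
  ereal_sup [set ACEmorph R f w | f in @Inj S G].

Definition ACE'_I (R : realType) (S G : eqType) (w : nat -> S) : \bar R :=
  limn_esup (fun n => ereal_sup [set ExpI R G u | u in FactInf w n]).

(* Main.v *)
Require Import Defs.
From mathcomp Require Import all_boot all_order all_algebra.
From mathcomp Require Import all_classical all_reals all_analysis.
From mathcomp Require Import lra zify.
Set Implicit Arguments. Unset Strict Implicit. Unset Printing Implicit Defensive.
Import Order.TTheory GRing.Theory Num.Theory.

Section Comb.
Variables (S G : Type) (f : S -> seq G) (L : nat).
Hypothesis hL : forall a, (size (f a) <= L)%N.

Lemma morph_cat u1 u2 : morph f (u1 ++ u2) = morph f u1 ++ morph f u2.
Proof. by rewrite /morph map_cat flatten_cat. Qed.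

Lemma cat_split (T : Type) (a b c d : seq T) : a ++ b = c ++ d ->
  (size a <= size c)%N -> c = a ++ drop (size a) c /\ b = drop (size a) c ++ d.
Proof.
move=> E le.
have Ht : take (size a) c = a.
  by have := congr1 (take (size a)) E; rewrite take_size_cat // takel_cat.
have Hc : c = a ++ drop (size a) c by rewrite -{1}(cat_take_drop (size a) c) Ht.
split=> //.
by move: E; rewrite {1}Hc -catA => /(congr1 (drop (size a))); rewrite !drop_size_cat.
Qed.

Lemma trimL u : forall y x, morph f u = y ++ x ->
  exists u1 u2 y', [/\ u = u1 ++ u2, x = y' ++ morph f u2 & (size y' <= L)%N].
Proof.
elim: u => [|a u IH] y x /=.
  case: y => //; case: x => // _.
  by exists [::], [::], [::].
move=> E; have [ley|ltay] := leqP (size (f a)) (size y).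
  have [Hy Hu] := cat_split E ley.
  have [u1 [u2 [y' [-> -> Hs]]]] := IH _ _ Hu.
  by exists (a :: u1), u2, y'.
have [Hy Hu] := cat_split (esym E) (ltnW ltay).
exists [:: a], u, (drop (size y) (f a)); split => //.
by rewrite size_drop (leq_trans (leq_subr _ _)).
Qed.

Lemma trimR u : forall x z, morph f u = x ++ z ->
  exists u1 u2 z', [/\ u = u1 ++ u2, x = morph f u1 ++ z' & (size z' <= L)%N].
Proof.
elim: u => [|a u IH] x z /=.
  case: x => //; case: z => // _.
  by exists [::], [::], [::].
move=> E; have [lex|ltax] := leqP (size x) (size (f a)).
  exists [::], (a :: u), x; split => //.
  exact: leq_trans lex (hL a).
have [Hx Hu] := cat_split E (ltnW ltax).
have [u1 [u2 [z' [-> Hx0 Hs]]]] := IH _ _ Hu.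
exists (a :: u1), u2, z'; split => //.
by rewrite Hx Hx0 /morph /= catA.
Qed.

Lemma trim u y x z : morph f u = y ++ x ++ z -> (L <= size x)%N ->
  exists u1 u3 u4 y' z', [/\ u = u1 ++ u3 ++ u4, x = y' ++ morph f u3 ++ z',
     (size y' <= L)%N & (size z' <= L)%N].
Proof.
move=> E Lx.
have [u1 [u2 [y' [-> E2 Hy]]]] := trimL E.
have [Hx Hu2] := cat_split (esym E2) (leq_trans Hy Lx).
have [u3 [u4 [z' [-> Hx' Hz]]]] := trimR Hu2.
exists u1, u3, u4, y', z'; split => //.
by rewrite Hx Hx' catA.
Qed.

Lemma size_morph u : (size (morph f u) <= L * size u)%N.
Proof.
elim: u => [|a u IH] //=.
by rewrite size_cat mulnS leq_add.
Qed.

End Comb.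

Lemma fact_cat (T : Type) (w : nat -> T) M u1 u3 u4 :
  [seq w i | i <- iota 0 M] = u1 ++ u3 ++ u4 ->
  u3 = [seq w i | i <- iota (size u1) (size u3)].
Proof.
move=> E.
have H : u3 = take (size u3) (drop (size u1) (u1 ++ u3 ++ u4)).
  by rewrite drop_size_cat // take_size_cat.
have HM : M = size u1 + size u3 + size u4.
  by have := congr1 size E; rewrite size_map size_iota !size_cat addnA.
rewrite {1}H -E -map_drop -map_take drop_iota take_iota add0n HM.
have -> : minn (size u3) (size u1 + size u3 + size u4 - size u1) = size u3 by lia.
by [].
Qed.

Section Rpow.
Variable T : eqType.

Lemma size_flatten_nseq (v : seq T) k : size (flatten (nseq k v)) = (k * size v)%N.
Proof. by elim: k => //= k IH; rewrite size_cat IH mulSn. Qed.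

Lemma nth_flatten_nseq (d : T) v k i : (i < k * size v)%N ->
  nth d (flatten (nseq k v)) i = nth d v (i %% size v).
Proof.
elim: k i => [|k IH] i /=; first by rewrite mul0n.
rewrite mulSn nth_cat => lt.
case: ltnP => H; first by rewrite modn_small.
rewrite IH; last by rewrite ltn_subLR.
by rewrite -{2}(subnK H) modnDr.
Qed.

Lemma size_rpow (v : seq T) p : v != [::] -> size (rpow v p) = p.
Proof.
move=> vn; rewrite /rpow size_takel // size_flatten_nseq.
by rewrite leq_pmulr // lt0n size_eq0.
Qed.

Lemma nth_rpow (d : T) v p i : v != [::] -> (i < p)%N ->
  nth d (rpow v p) i = nth d v (i %% size v).
Proof.
move=> vn ip; rewrite /rpow nth_take // nth_flatten_nseq //.
by rewrite (leq_trans ip) // leq_pmulr // lt0n size_eq0.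
Qed.

Lemma rpow_rot (d : T) v y z y2 : v != [::] ->
  y ++ z ++ y2 = rpow v (size (y ++ z ++ y2)) ->
  exists v' : seq T, v' != [::] /\ size v' = size v /\ z = rpow v' (size z).
Proof.
move=> vn E.
pose v' := [seq nth d v ((i + size y) %% size v) | i <- iota 0 (size v)].
exists v'.
have sv : size v' = size v by rewrite size_map size_iota.
have v'n : v' != [::] by rewrite -size_eq0 sv size_eq0.
have q0 : (0 < size v)%N by rewrite lt0n size_eq0.
do 2!split => //.
apply: (@eq_from_nth _ d); first by rewrite size_rpow.
move=> i iz.
rewrite nth_rpow // sv (nth_map 0%N); last by rewrite size_iota ltn_pmod.
rewrite nth_iota ?ltn_pmod // add0n modnDml.
have := congr1 (fun s => nth d s (size y + i)) E => /=.
rewrite nth_rpow //; last by rewrite !size_cat ltn_add2l ltn_addr.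
by rewrite nth_cat ltnNge leq_addr /= addKn nth_cat iz addnC.
Qed.

End Rpow.

Section ExpL.
Variables (R : realType) (T : eqType).
Local Open Scope ereal_scope.

Lemma Exp_ge (v : seq T) x : v != [::] -> x = rpow v (size x) ->
  (((size x)%:R / (size v)%:R : R)%R)%:E <= Exp R x.
Proof.
move=> vn xE; apply: ereal_sup_ubound.
exists ((size x)%:R / (size v)%:R : rat)%R.
  by exists v; split => //; exists (size x).
by rewrite fmorph_div !rmorph_nat.
Qed.

Lemma Exp_le x s : (forall v : seq T, v != [::] -> x = rpow v (size x) ->
  (((size x)%:R / (size v)%:R : R)%R)%:E <= s) -> Exp R x <= s.
Proof.
move=> H; apply: ge_ereal_sup => _ [r [v [vn [p [-> xE]]]] <-].
have px : p = size x by rewrite xE size_rpow.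
rewrite fmorph_div !rmorph_nat; subst p; exact: H.
Qed.

End ExpL.

Local Open Scope ring_scope.
Lemma arith (R : realType) (N H K L Q t s : R) : 0 < Q -> 0 <= H -> H <= t * Q ->
  N <= H + 2 * L -> 2 * L + K <= N -> 2 * L * s < K * (s - t) -> t < s -> 0 < L ->
  N <= s * Q.
Proof.
move=> Q0 H0 HtQ NH KN Ks ts L0.
have st : 0 < s - t by lra.
have t0 : 0 <= t by nra.
have key : t * (2 * L) < t * ((s - t) * Q).
  have e1 : (s - t) * H <= (s - t) * (t * Q) by rewrite ler_pM2l.
  have e2 : (s - t) * K <= (s - t) * H by rewrite ler_pM2l //; lra.
  have e3 : 2 * L * t <= 2 * L * s by rewrite ler_pM2l; lra.
  nra.
have tp : 0 < t.
  rewrite lt_def t0 andbT; apply/eqP => tz; move: key; rewrite tz !mul0r ltxx //.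
have : 2 * L < (s - t) * Q by rewrite -(ltr_pM2l tp).
nra.
Qed.

Section Main.
Variables (R : realType) (Sigma Gamma : finType) (w : nat -> Sigma).
Local Open Scope ereal_scope.

Definition Aseq (f : Sigma -> seq Gamma) n :=
  ereal_sup [set Exp R u | u in FactMorph f w n].
Definition Bseq m := ereal_sup [set ExpI R Gamma u | u in FactInf w m].

Lemma limn_esupE (u : (\bar R)^nat) : limn_esup u = ereal_inf (range (esups u)).
Proof. by rewrite limn_esup_lim; apply/cvg_lim => //; exact: cvg_esups_inf. Qed.

Lemma key f (fI : @Defs.Inj Sigma Gamma f) M (t s : R) : esups Bseq M <= t%:E -> (t < s)%R ->
  exists N, esups (Aseq f) N <= s%:E.
Proof.
move=> Bt ts.
pose L := (\max_(a : Sigma) size (f a)).+1.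
have hL a : (size (f a) <= L)%N by apply: leqW; apply: leq_bigmax.
have L0 : (0 < L)%N by [].
pose K := Num.bound `|2 * L%:R * s / (s - t)|%R.
exists (L * M + 2 * L + K)%N.
apply: ge_ereal_sup => _ [n /= Nn <-].
apply: ge_ereal_sup => _ [x [sx [Mx /infixP [y [z E]]]] <-].
apply: Exp_le => v vn xE.
have Lx : (L <= size x)%N by rewrite sx; lia.
have [u1 [u3 [u4 [y' [z' [Eu Ex Hy Hz]]]]]] := trim hL E Lx.
case: v vn xE => [//|d v0] vn xE.
have xE2 : y' ++ morph f u3 ++ z' = rpow (d :: v0) (size (y' ++ morph f u3 ++ z')).
  by rewrite -Ex.
have [v' [vn' [sv' Ehu]]] := @rpow_rot _ d (d :: v0) y' (morph f u3) z' vn xE2.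
have E1 := Exp_ge R vn' Ehu.
have sxe : size x = (size y' + size (morph f u3) + size z')%N
  by rewrite Ex !size_cat addnA.
have Hu3M : (M <= size u3)%N.
  have := size_morph hL u3.
  move=> H1; rewrite -(leq_pmul2l L0); lia.
have E2 : Exp R (morph f u3) <= ExpI R Gamma u3.
  by apply: ereal_sup_ubound; exists f.
have E3 : ExpI R Gamma u3 <= Bseq (size u3).
  by apply: ereal_sup_ubound; exists u3 => //; exists (size u1); exact: fact_cat Eu.
have E4 : Bseq (size u3) <= esups Bseq M.
  by apply: ereal_sup_ubound; exists (size u3).
have Ht := le_trans E1 (le_trans E2 (le_trans E3 (le_trans E4 Bt))).
rewrite lee_fin in Ht.
rewrite sv' in Ht.
set q := size (d :: v0) in Ht *.
have q0 : (0 < q%:R :> R)%R by rewrite ltr0n.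
rewrite lee_fin ler_pdivrMr //.
apply: (@arith R (size x)%:R (size (morph f u3))%:R K%:R L%:R q%:R t s) => //.
- by rewrite -ler_pdivrMr.
- have : (size x <= size (morph f u3) + 2 * L)%N by lia.
  by rewrite -(ler_nat R) natrD natrM.
- have : (2 * L + K <= size x)%N by lia.
  by rewrite -(ler_nat R) natrD natrM.
- have st : (0 < s - t)%R by rewrite subr_gt0.
  rewrite -ltr_pdivrMr //.
  apply: le_lt_trans (ler_norm _) _.
  exact: archi_boundP.
Qed.

Lemma le_from_reals (X T : \bar R) :
  (forall s : R, T < s%:E -> X <= s%:E) -> X <= T.
Proof.
case: T => [t||] H //.
- rewrite leNgt; apply/negP => tX.
  case: X H tX => [x||] H tX //.
  + have := H ((t + x) / 2)%R; rewrite !lte_fin lee_fin.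
    rewrite lte_fin in tX.
    move=> /(_ ltac:(lra)) h1; exfalso; lra.
  + have := H (t + 1)%R; rewrite lte_fin => /(_ ltac:(lra)).
    by [].
- exact: leey.
- case: X H => [x||] H //.
  + have h1 := H (x - 1)%R (ltNyr _).
    rewrite lee_fin in h1.
    exfalso; lra.
  + by have := H 0%R (ltNyr _).
Qed.

End Main.

Local Open Scope ereal_scope.

Theorem corollary21 (R : realType) (Sigma Gamma : finType)
  (hSigma : (1 < #|Sigma|)%N) (hGamma : (1 < #|Gamma|)%N)
  (w : nat -> Sigma) :
  ACE_I R Gamma w <= ACE'_I R Gamma w.
Proof.
apply: ge_ereal_sup => _ [f fI <-].
rewrite /ACEmorph /ACE'_I !limn_esupE.
apply: le_ereal_inf_tmp => _ [M _ <-].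
apply: le_from_reals => s Ms.
have [t [Mt ts]] : exists t : R, esups (Bseq R Gamma w) M <= t%:E /\ (t < s)%R.
  move: Ms; rewrite /Bseq; case: (esups _ M) => [t||] //= Ms.
    by exists t; split => //; rewrite -lte_fin.
  by exists (s - 1)%R; split; [exact: leNye | lra].
have [N HN] := key fI Mt ts.
apply: le_trans HN.
by apply: ereal_inf_lbound; exists N.
Qed.
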